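(* Let $x,t$ be formal variables. Then, as formal power series in $t$ with coefficients polynomial in $x$, $$\sum_{n\ge 1}\sum_{[\pi]\in\mathfrak{C}_n^o}x^{\operatorname{drop}_{oo}([\pi])}t^n = \sum_{m\ge 1}\frac{m!(m-1)!\,t^{2m}}{\prod_{k=1}^m \big(1+k^2(1-x)t^2\big)}+\sum_{m\ge 1}\frac{\big((m-1)!\big)^2t^{2m-1}}{\prod_{k=1}^m \big(1+k^2(1-x)t^2\big)}.$$
   Context: For $n\ge1$, a cycle on $[n]=\{1,\dots,n\}$ is an equivalence class $[\pi]$ of permutations $\pi=\pi_1\cdots\pi_n$ of $[n]$ (in one-line notation) under cyclic rotation of the entries; the set of cycles on $[n]$ is $\mathfrak{C}_n$. Each cycle is represented by the permutation $\pi$ with $\pi_1=1$, and indices are read modulo $n$ (so $\pi_{n+1}=\pi_1$). A drop of $[\pi]$ is a consecutive pair $(\pi_i,\pi_{i+1})$, $1\le i\le n$, with $\pi_i>\pi_{i+1}$; drops do not depend on the choice of rotation. By convention, the unique cycle $[(1)]\in\mathfrak{C}_1$ has exactly one drop $(\star,1)$, where $\star$ is considered neither even nor odd. A drop $(a,b)$ is odd-odd if $a$ and $b$ are both odd, and even-odd if $a$ is even and $b$ is odd. $\operatorname{drop}_{oo}([\pi])$ and $\operatorname{drop}_{eo}([\pi])$ denote the numbers of odd-odd and even-odd drops of $[\pi]$, respectively. Finally $\mathfrak{C}_n^o$ is the set of cycles $[\pi]\in\mathfrak{C}_n$ such that for every drop $(\pi_i,\pi_{i+1})$ of $[\pi]$,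 the entry $\pi_{i+1}$ is odd. *)

(* Defs.v *)
From mathcomp Require Import all_boot all_order all_algebra.
Set Implicit Arguments. Unset Strict Implicit. Unset Printing Implicit Defensive.
Import GRing.Theory.
Local Open Scope ring_scope.

Definition fps (R : Type) := nat -> R.

Definition fps_of_poly (R : nzRingType) (p : {poly R}) : fps R := fun n => p`_n.

Definition fps_mul (R : nzRingType) (f g : fps R) : fps R :=
  fun n => \sum_(i < n.+1) f i * g (n - i)%N.

(* first n+1 coefficients of the multiplicative inverse of f
   (f 0 assumed to be a unit) *)
Fixpoint fps_inv_seq (R : unitRingType) (f : fps R) (n : nat) : seq R :=
  match n with
  | 0 => [:: (f 0%N)^-1]
  | n'.+1 => let s := fps_inv_seq f n' in
      rcons s (- (f 0%N)^-1 * \sum_(i < n'.+1) f (n'.+1 - i)%N * nth 0 s i)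
  end.

Definition fps_inv (R : unitRingType) (f : fps R) : fps R :=
  fun n => nth 0 (fps_inv_seq f n) n.

(* Sum of a family (F m)_{m >= 1} of power series in which F m has
   t-adic valuation >= m (so the family is summable): the coefficient of
   t^n only receives contributions from 1 <= m <= n. *)
Definition fps_sum1 (R : nzRingType) (F : nat -> fps R) : fps R :=
  fun n => \sum_(1 <= m < n.+1) F m n.

(* A cycle [pi] on [n] is represented by its one-line notation s with s_1 = 1. *)
Definition cycles (n : nat) : seq (seq nat) :=
  [seq s <- permutations (iota 1 n) | head 0%N s == 1%N].

Definition cyc_pairs (s : seq nat) : seq (nat * nat) := zip s (rot 1 s).

Definition drops (s : seq nat) : seq (nat * nat) :=
  [seq p <- cyc_pairs s | (p.2 < p.1)%N].

Definition in_Co (s : seq nat) : bool := all (fun p => odd p.2) (drops s).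

Definition drop_oo (s : seq nat) : nat :=
  count (fun p => odd p.1 && odd p.2) (drops s).

Definition lhs_series : fps {poly int} :=
  fun n => if (0 < n)%N then \sum_(s <- cycles n | in_Co s) 'X^(drop_oo s) else 0.

Definition denom (m : nat) : {poly {poly int}} :=
  \prod_(1 <= k < m.+1) (1 + ((k ^ 2)%:R * (1 - 'X))%:P * 'X^2).

Definition term1 (m : nat) : fps {poly int} :=
  fps_mul (fps_of_poly ((m`! * (m.-1)`!)%N%:R%:P * 'X^(2 * m)))
          (fps_inv (fps_of_poly (denom m))).

Definition term2 (m : nat) : fps {poly int} :=
  fps_mul (fps_of_poly (((m.-1)`! ^ 2)%N%:R%:P * 'X^((2 * m).-1)))
          (fps_inv (fps_of_poly (denom m))).

Definition rhs_series : fps {poly int} :=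
  fun n => fps_sum1 term1 n + fps_sum1 term2 n.

(* Main.v *)
Require Import Defs.
From mathcomp Require Import all_boot all_order all_algebra.
From mathcomp Require Import zify ring.
From Stdlib Require Import Lia.
Set Implicit Arguments. Unset Strict Implicit. Unset Printing Implicit Defensive.
Import GRing.Theory.
Local Open Scope ring_scope.

Fixpoint T (n m : nat) : nat :=
  match n, m with
  | 0, 0 => 1%N
  | 0, _ => 0%N
  | n'.+1, 0 => 0%N
  | n'.+1, m'.+1 => (T n' m' + m'.+1 ^ 2 * T n' m'.+1)%N
  end.

Lemma T_gt n m : (n < m)%N -> T n m = 0%N.
Proof.
elim: n m => [|n IH] [|m] //= H.
rewrite (IH m) ?(IH m.+1) //; lia.
Qed.

Lemma T_diag n : T n n = 1%N.
Proof. by elim: n => //= n ->; rewrite T_gt // muln0. Qed.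

Lemma TS n m : T n.+1 m.+1 = (T n m + m.+1 ^ 2 * T n m.+1)%N.
Proof. by []. Qed.
Lemma T_S0 n : T n.+1 0 = 0%N.
Proof. by []. Qed.

Arguments T : simpl never.

Local Notation y := ('X - 1 : {poly int}).

Definition Gx (m j : nat) : {poly int} :=
  if odd j then 0 else (T (m + j./2) m)%:R * y ^+ j./2.

Lemma Gx_odd m k : Gx m k.*2.+1 = 0.
Proof. by rewrite /Gx /= odd_double. Qed.

Lemma Gx_even m k : Gx m k.*2 = (T (m + k) m)%:R * y ^+ k.
Proof. by rewrite /Gx odd_double /= doubleK. Qed.

Lemma eo_cases i : exists k, i = k.*2 \/ i = k.*2.+1.
Proof.
exists i./2; move: (odd_double_half i); case: (odd i) => /= H; [right|left]; lia.
Qed.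

Lemma Gx_rec m i :
  Gx m.+1 i + ((m.+1 ^ 2)%:R * (1 - 'X)) * (if (i < 2)%N then 0 else Gx m.+1 (i - 2))
  = Gx m i.
Proof.
have [k [->|->]] := eo_cases i.
  case: k => [|k]; first by rewrite /= mulr0 addr0 !Gx_even !addn0 !T_diag.
  rewrite doubleS /= subSS subSS subn0 -doubleS !Gx_even.
  rewrite !addnS addSn /=.
  rewrite TS natrD natrM.
  have -> : (1 - 'X : {poly int}) = - y by rewrite opprB.
  rewrite exprS. ring.
case: k => [|k]; first by rewrite /= !Gx_odd mulr0 addr0.
by rewrite !Gx_odd doubleS /= mulr0 addr0.
Qed.

Section Inv.
Variable R : comUnitRingType.

Lemma size_fps_inv_seq (f : fps R) n : size (fps_inv_seq f n) = n.+1.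
Proof. by elim: n => //= n IH; rewrite size_rcons IH. Qed.

Lemma fps_inv_seq_nth (f : fps R) n i : (i <= n)%N -> nth 0 (fps_inv_seq f n) i = fps_inv f i.
Proof.
elim: n i => [|n IH] i Hi; first by case: i Hi.
rewrite leq_eqVlt in Hi; case/orP: Hi => [/eqP -> //|Hi].
by rewrite /= nth_rcons size_fps_inv_seq Hi IH.
Qed.

Lemma fps_invS (f : fps R) n :
  fps_inv f n.+1 = - (f 0%N)^-1 * \sum_(i < n.+1) f (n.+1 - i)%N * fps_inv f i.
Proof.
rewrite {1}/fps_inv /= nth_rcons size_fps_inv_seq ltnn eqxx.
congr (_ * _); apply: eq_bigr => i _; by rewrite fps_inv_seq_nth // -ltnS.
Qed.

Lemma fps_inv_eq (f g : fps R) : f 0%N = 1 -> g 0%N = 1 ->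
  (forall n, (0 < n)%N -> \sum_(i < n.+1) g i * f (n - i)%N = 0) ->
  forall n, fps_inv f n = g n.
Proof.
move=> f0 g0 H; elim/ltn_ind => [[|n]] IH.
  by rewrite /fps_inv /= f0 invr1.
rewrite fps_invS f0 invr1 mulN1r.
have := H n.+1 isT; rewrite big_ord_recr /= subnn f0 mulr1 => /eqP.
rewrite addrC addr_eq0 => /eqP ->.
congr (- _); apply: eq_bigr => i _; rewrite IH 1?mulrC //.
Qed.
End Inv.

Lemma fps_mul_poly (P : {poly {poly int}}) (G : fps {poly int}) n :
  fps_mul (fps_of_poly P) G n = (P * \poly_(i < n.+1) G i)`_n.
Proof.
rewrite coefM; apply: eq_bigr => i _.
by rewrite coef_poly /fps_of_poly ltnS leq_subr.
Qed.

Lemma coefM_agree (A B p : {poly {poly int}}) n :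
  (forall i, (i <= n)%N -> A`_i = B`_i) -> (A * p)`_n = (B * p)`_n.
Proof.
move=> H; rewrite !coefM; apply: eq_bigr => i _.
by rewrite H // -ltnS.
Qed.

Lemma denomS m : denom m.+1 = denom m * (1 + (((m.+1) ^ 2)%:R * (1 - 'X))%:P * 'X^2).
Proof. by rewrite /denom big_nat_recr. Qed.

Lemma Ginv m N n : (n <= N)%N ->
  (\poly_(i < N.+1) Gx m i * denom m)`_n = (n == 0)%:R.
Proof.
elim: m n => [|m IH] n Hn.
  rewrite /denom big_geq // mulr1 coef_poly ltnS Hn.
  have [k [->|->]] := eo_cases n; last by rewrite Gx_odd.
  rewrite Gx_even add0n; case: k => [|k] /=; [by rewrite expr0 mulr1 | by rewrite mul0r].
rewrite denomS mulrCA mulrC.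
rewrite (@coefM_agree _ (\poly_(i < N.+1) Gx m i)); first by rewrite IH.
move=> i Hi; rewrite mulrDr mulr1 coefD !coef_poly.
have HiN : (i < N.+1)%N by rewrite ltnS (leq_trans Hi).
rewrite HiN mulrCA coefCM coefMXn.
rewrite -(Gx_rec m i).
case: ifP => Hi2; first by rewrite mulr0 addr0.
by rewrite coef_poly (leq_ltn_trans (leq_subr _ _) HiN).
Qed.

Lemma Gx0 m : Gx m 0 = 1.
Proof. by have := Gx_even m 0; rewrite addn0 T_diag expr0 mulr1. Qed.

Lemma invD m j : fps_inv (fps_of_poly (denom m)) j = Gx m j.
Proof.
have Hc n : \sum_(i < n.+1) Gx m i * (denom m)`_(n - i) = (\poly_(i < n.+1) Gx m i * denom m)`_n.
  rewrite coefM; apply: eq_bigr => i _; by rewrite coef_poly ltn_ord.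
apply: fps_inv_eq.
- by have := Ginv m (leq0n 0); rewrite coef0M coef_poly /= Gx0 mul1r.
- by apply: Gx0.
- by move=> n Hn; rewrite /fps_of_poly Hc Ginv // eqn0Ngt Hn.
Qed.

Lemma termE (c : {poly int}) k m n :
  fps_mul (fps_of_poly (c%:P * 'X^k)) (fps_inv (fps_of_poly (denom m))) n =
  if (n < k)%N then 0 else c * Gx m (n - k).
Proof.
rewrite fps_mul_poly -mulrA coefCM coefXnM coef_poly.
case: ifP => _; first by rewrite mulr0.
by rewrite ltnS leq_subr invD.
Qed.

Lemma fps_sum1E (F : nat -> fps {poly int}) n : fps_sum1 F n = \sum_(m < n) F m.+1 n.
Proof. by rewrite /fps_sum1 big_add1 /= big_mkord. Qed.

Definition am (m : nat) : {poly int} := (m`! * (m.-1)`!)%:R.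
Definition bm (m : nat) : {poly int} := ((m.-1)`! ^ 2)%:R.

Definition Esum N := \sum_(m < N) am m.+1 * (T N m.+1)%:R * y ^+ (N - m.+1).
Definition Osum N := \sum_(m < N) bm m.+1 * (T N m.+1)%:R * y ^+ (N - m.+1).

Lemma rhs_even N : rhs_series N.*2 = Esum N.
Proof.
rewrite /rhs_series !fps_sum1E.
rewrite [X in _ + X]big1 ?addr0; last first.
  move=> i _; rewrite /term2 termE; case: ifP => // H.
  have -> : (N.*2 - (2 * i.+1).-1)%N = (N - i.+1).*2.+1.
    move: H; lia.
  by rewrite Gx_odd mulr0.
rewrite -addnn big_split_ord /= [X in _ + X]big1 ?addr0; last first.
  move=> i _; rewrite /term1 termE ifT //; lia.
apply: eq_bigr => i _; rewrite /term1 termE ifF; last by move: (ltn_ord i); lia.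
have -> : ((N + N) - 2 * i.+1)%N = (N - i.+1).*2 by move: (ltn_ord i); lia.
rewrite Gx_even /am mulrA.
have -> : (i.+1 + (N - i.+1))%N = N by move: (ltn_ord i); lia.
by [].
Qed.

Lemma rhs_odd N : rhs_series N.*2.+1 = Osum N.+1.
Proof.
rewrite /rhs_series !fps_sum1E.
rewrite [X in X + _]big1 ?add0r; last first.
  move=> i _; rewrite /term1 termE; case: ifP => // H.
  have -> : (N.*2.+1 - 2 * i.+1)%N = (N - i.+1).*2.+1.
    move: H; lia.
  by rewrite Gx_odd mulr0.
have -> : N.*2.+1 = (N.+1 + N)%N by lia.
rewrite big_split_ord /= [X in _ + X]big1 ?addr0; last first.
  move=> i _; rewrite /term2 termE ifT //; lia.
apply: eq_bigr => i _; rewrite /term2 termE ifF; last by move: (ltn_ord i); lia.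
have -> : ((N.+1 + N) - (2 * i.+1).-1)%N = (N.+1 - i.+1).*2 by move: (ltn_ord i); lia.
rewrite Gx_even /bm mulrA.
have -> : (i.+1 + (N.+1 - i.+1))%N = N.+1 by move: (ltn_ord i); lia.
by [].
Qed.

Lemma deriv_y : (y)^`() = 1.
Proof. by rewrite derivB derivX derivC subr0. Qed.

Lemma deriv_natc (n : nat) : ((n%:R : {poly int}))^`() = 0.
Proof. by rewrite -polyC_natr derivC. Qed.

Lemma inner (c : {poly int}) N m : c^`() = 0 -> (m <= N)%N ->
  (N.+1)%:R * (c * y ^+ (N - m)) + (1 - 'X) * (c * y ^+ (N - m))^`()
  = (m.+1)%:R * c * y ^+ (N - m).
Proof.
move=> dc HmN; rewrite derivM dc mul0r add0r deriv_exp deriv_y mul1r.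
have -> : (1 - 'X : {poly int}) = - y by rewrite opprB.
have -> : N = (m + (N - m))%N by rewrite subnKC.
rewrite addKn; move: (N - m)%N => k.
case: k => [|k]; first by rewrite addn0 mulr0n !mulr0 addr0 mulrA.
rewrite /= -mulr_natr exprS; ring.
Qed.

Lemma deriv_sum (I : Type) (r : seq I) (F : I -> {poly int}) :
  (\sum_(i <- r) F i)^`() = \sum_(i <- r) (F i)^`().
Proof.
elim: r => [|a r IH]; first by rewrite !big_nil deriv0.
by rewrite !big_cons derivD IH.
Qed.

Lemma Esum_rec N : Esum N.+1 = (N.+1)%:R * Osum N.+1 + (1 - 'X) * (Osum N.+1)^`().
Proof.
rewrite /Osum deriv_sum mulr_sumr mulr_sumr -big_split /Esum.
apply: eq_bigr => i _; rewrite subSS /= inner; last by rewrite -ltnS.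
  rewrite /am /bm factS /=; rewrite !natrM; ring.
by rewrite derivM !deriv_natc mul0r mulr0 addr0.
Qed.

Lemma Esum_inner N : (N.+1)%:R * Esum N.+1 + (1 - 'X) * (Esum N.+1)^`()
  = \sum_(i < N.+1) (i.+1)%:R * (am i.+1 * (T N.+1 i.+1)%:R) * y ^+ (N - i).
Proof.
rewrite /Esum deriv_sum mulr_sumr mulr_sumr -big_split.
apply: eq_bigr => i _; rewrite subSS /= inner; last by rewrite -ltnS.
  by [].
by rewrite derivM !deriv_natc mul0r mulr0 addr0.
Qed.

Lemma Osum_rec N : Osum N.+2 = 'X * ((N.+1)%:R * Esum N.+1 + (1 - 'X) * (Esum N.+1)^`()).
Proof.
rewrite Esum_inner mulr_sumr /Osum.
rewrite [LHS](eq_bigr (fun i : 'I_N.+2 => bm i.+1 * (T N.+1 i)%:R * y ^+ (N.+2 - i.+1)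
   + bm i.+1 * (i.+1 ^ 2 * T N.+1 i.+1)%:R * y ^+ (N.+2 - i.+1))); last first.
  by move=> i _; rewrite TS natrD !mulrDr !mulrDl.
rewrite big_split /= big_ord_recl T_S0 mulr0 mul0r add0r [X in _ + X]big_ord_recr /=.
rewrite (T_gt (ltnSn _)) muln0 mulr0 mul0r addr0 -big_split /=.
apply: eq_bigr => i _; rewrite /bump /= add1n subSS /bm /am !factS /= !natrM ?natrX.
rewrite !subSS.
have -> : (N.+1 - i)%N = (N - i).+1 by rewrite subSn // -ltnS.
rewrite exprS; ring.
Qed.

Lemma Osum1 : Osum 1 = 1.
Proof. by rewrite /Osum big_ord1 /bm /= T_diag mulr1 mul1r. Qed.
Definition okp (p : nat * nat) : bool := (p.2 < p.1)%N ==> odd p.2.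
Definition oop (p : nat * nat) : bool := (p.2 < p.1)%N && (odd p.1 && odd p.2).

Lemma in_CoE s : in_Co s = all okp (cyc_pairs s).
Proof. by rewrite /in_Co /drops all_filter. Qed.

Lemma drop_ooE s : drop_oo s = count oop (cyc_pairs s).
Proof.
rewrite /drop_oo /drops count_filter; apply: eq_count => p.
by rewrite /oop /= andbC.
Qed.

Lemma zip_rot1 (a b : seq nat) : size a = size b -> zip (rot 1 a) (rot 1 b) = rot 1 (zip a b).
Proof.
case: a b => [|x a] [|z b] //= [Hs].
by rewrite !rot1_cons zip_rcons.
Qed.

Lemma cyc_pairs_rot1 s : cyc_pairs (rot 1 s) = rot 1 (cyc_pairs s).
Proof. by rewrite /cyc_pairs zip_rot1 // size_rot. Qed.

Lemma cyc_pairs_rot k s : (k <= size s)%N -> cyc_pairs (rot k s) = rot k (cyc_pairs s).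
Proof.
elim: k => [|k IH] Hk; first by rewrite !rot0.
have Hs : size (cyc_pairs s) = size s by rewrite /cyc_pairs size_zip size_rot minnn.
rewrite (rotS Hk) cyc_pairs_rot1 IH ?(ltnW Hk) //.
by rewrite (@rotS _ k (cyc_pairs s)) // Hs.
Qed.

Lemma perm_rot' (T : eqType) k (s : seq T) : perm_eq (rot k s) s.
Proof. by rewrite perm_rot. Qed.

Lemma in_Co_rot k s : (k <= size s)%N -> in_Co (rot k s) = in_Co s.
Proof. by move=> Hk; rewrite !in_CoE cyc_pairs_rot // (perm_all _ (perm_rot' _ _)). Qed.

Lemma drop_oo_rot k s : (k <= size s)%N -> drop_oo (rot k s) = drop_oo s.
Proof. by move=> Hk; rewrite !drop_ooE cyc_pairs_rot // (permP (perm_rot' _ _)). Qed.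

Lemma cyc_pairs_cons x w : cyc_pairs (x :: w) = rcons (zip (belast x w) w) (last x w, x).
Proof.
by rewrite /cyc_pairs rot1_cons [x :: w]lastI zip_rcons ?size_belast.
Qed.

Lemma count_rcons' (T : Type) (a : pred T) s z : count a (rcons s z) = (count a s + a z)%N.
Proof. by rewrite -cats1 count_cat /= addn0. Qed.

Lemma cyc_pairs_rcons x w n :
  cyc_pairs (rcons (x :: w) n) = rcons (rcons (zip (belast x w) w) (last x w, n)) (n, x).
Proof.
rewrite rcons_cons cyc_pairs_cons belast_rcons last_rcons.
by rewrite [x :: w]lastI zip_rcons ?size_belast.
Qed.

Lemma in_Co_rcons x w n : (x < n)%N -> (last x w < n)%N ->
  in_Co (rcons (x :: w) n) = odd x && in_Co (x :: w).
Proof.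
move=> Hx Hl; rewrite !in_CoE cyc_pairs_rcons cyc_pairs_cons !all_rcons.
rewrite /okp /= Hx ltnNge (ltnW Hl) /=.
by case: (odd x); rewrite ?implybT.
Qed.

Lemma drop_oo_cons x w :
  drop_oo (x :: w) = (count oop (zip (belast x w) w) + oop (last x w, x))%N.
Proof. by rewrite drop_ooE cyc_pairs_cons count_rcons'. Qed.

Lemma drop_oo_rcons x w n : (x < n)%N -> (last x w < n)%N ->
  drop_oo (rcons (x :: w) n) = (count oop (zip (belast x w) w) + (odd n && odd x))%N.
Proof.
move=> Hx Hl; rewrite drop_ooE cyc_pairs_rcons !count_rcons'.
by rewrite /oop /= Hx ltnNge (ltnW Hl) /= addn0.
Qed.

Definition ins (s : seq nat) i n := take i s ++ n :: drop i s.

Lemma size_ins s i n : size (ins s i n) = (size s).+1.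
Proof. by rewrite /ins size_cat /= addnS -size_cat cat_take_drop. Qed.

Lemma rot_ins s i n : (i <= size s)%N -> rot i.+1 (ins s i n) = rcons (rot i s) n.
Proof.
move=> Hi; rewrite /ins -cat_rcons.
have Hsz : size (rcons (take i s) n) = i.+1 by rewrite size_rcons size_takel.
by rewrite -Hsz rot_size_cat /rot rcons_cat.
Qed.

Definition Fp (t : seq nat) : {poly int} := if in_Co t then 'X^(drop_oo t) else 0.

Lemma last_rot (T : Type) (d : T) (c : seq T) i : (0 < i <= size c)%N ->
  last d (rot i c) = nth d c i.-1.
Proof.
case: i => // i /= Hi.
by rewrite /rot last_cat (take_nth d Hi) last_rcons.
Qed.

Lemma key_pair s i : (0 < i <= size s)%N ->
  (last 0%N (rot i s), head 0%N (rot i s)) = nth (0,0)%N (cyc_pairs s) i.-1.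
Proof.
move=> /andP [Hi0 Hi].
have Hs : size (cyc_pairs s) = size s by rewrite /cyc_pairs size_zip size_rot minnn.
rewrite -last_rot ?Hs ?Hi0 // -cyc_pairs_rot //.
case E: (rot i s) => [|x w].
  by move: (size_rot i s); rewrite E /=; move=> H; move: Hi0 Hi; rewrite -H; case: i {E}.
by rewrite cyc_pairs_cons last_rcons.
Qed.

Lemma F_ins s i n : all (fun z => z < n)%N s -> (0 < i <= size s)%N ->
  Fp (ins s i n) = if in_Co s then
    (if odd (head 0%N (rot i s)) then 'X^(odd n) * 'X^(drop_oo s - oop (last 0%N (rot i s), head 0%N (rot i s))) else 0)
    else 0.
Proof.
move=> Hall /andP [Hi0 Hi].
have Hsz : (i.+1 <= size (ins s i n))%N by rewrite size_ins.
rewrite /Fp -(in_Co_rot Hsz) -(drop_oo_rot Hsz) rot_ins //.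
rewrite -(in_Co_rot Hi) -(drop_oo_rot Hi).
have Hall' : all (fun z => z < n)%N (rot i s) by rewrite (perm_all _ (perm_rot' _ _)).
case E: (rot i s) Hall' => [|x w].
  by move: (size_rot i s); rewrite E /=; move=> H; move: Hi0 Hi; rewrite -H; case: i {E Hsz}.
move=> Ha.
have Hx : (x < n)%N by move/allP: Ha; apply; exact: mem_head.
have Hl : (last x w < n)%N by move/allP: Ha; apply; exact: mem_last.
rewrite in_Co_rcons // drop_oo_rcons // drop_oo_cons.
case: (odd x) => //=; case: (in_Co _) => //.
by rewrite addnK -exprD addnC andbT.
Qed.

Lemma oop_odd p : oop p -> odd p.2.
Proof. by case/and3P. Qed.

Lemma sum_pairs (r : seq (nat * nat)) K :
  \sum_(p <- r) (if odd p.2 then ('X^(K - oop p) : {poly int}) else 0)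
  = 'X^K *+ count (fun p => odd p.2 && ~~ oop p) r + 'X^(K.-1) *+ count oop r.
Proof.
elim: r => [|p r IH]; first by rewrite big_nil !mulr0n addr0.
rewrite big_cons IH /=.
case Ho: (oop p).
  rewrite (oop_odd Ho) /= subn1 mulrSr; ring.
rewrite subn0 /=; case: (odd p.2) => /=; last by rewrite add0r.
rewrite mulrSr; ring.
Qed.

Lemma count_split_oo (r : seq (nat * nat)) :
  (count (fun p => odd p.2 && ~~ oop p) r + count oop r)%N = count (fun p => odd p.2) r.
Proof.
elim: r => [|p r IH] //=.
case Ho: (oop p); first by rewrite (oop_odd Ho) /= -IH; lia.
rewrite /=; case: (odd p.2) => /=; lia.
Qed.

Lemma count_odd_iota m : count odd (iota 1 m) = uphalf m.
Proof.
elim: m => [|m IH] //.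
have -> : iota 1 m.+1 = iota 1 m ++ [:: m.+1] by have := iotaD 1 m 1; rewrite addn1 add1n.
rewrite count_cat IH /= addn0 !uphalf_half /=.
case: (odd m) => /=; lia.
Qed.

Lemma count_odd2 s m : perm_eq s (iota 1 m) ->
  count (fun p : nat * nat => odd p.2) (cyc_pairs s) = uphalf m.
Proof.
move=> Hp.
have -> : count (fun p : nat * nat => odd p.2) (cyc_pairs s) = count odd (unzip2 (cyc_pairs s)).
  by rewrite count_map.
rewrite /cyc_pairs unzip2_zip ?size_rot //.
by rewrite (permP (perm_rot' 1 s)) (permP Hp) count_odd_iota.
Qed.

Lemma sum_ins s m : perm_eq s (iota 1 m) ->
  \sum_(i <- iota 1 m) Fp (ins s i m.+1)
  = 'X^(odd m.+1) * ((uphalf m)%:R * Fp s + (1 - 'X) * (Fp s)^`()).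
Proof.
move=> Hp.
have Hsz : size s = m by rewrite (perm_size Hp) size_iota.
have Hall : all (fun z => z < m.+1)%N s.
  apply/allP => z; rewrite (perm_mem Hp) mem_iota; lia.
pose G (p : nat * nat) : {poly int} := if in_Co s then
   (if odd p.2 then 'X^(odd m.+1) * 'X^(drop_oo s - oop p) else 0) else 0.
rewrite (eq_big_seq (fun i => G (nth (0,0)%N (cyc_pairs s) i.-1))); last first.
  move=> i; rewrite mem_iota => Hi.
  have Hi' : (0 < i <= size s)%N by rewrite Hsz; lia.
  by rewrite F_ins // -key_pair.
have Hcp : size (cyc_pairs s) = m by rewrite /cyc_pairs size_zip size_rot minnn.
have -> : iota 1 m = map (addn 1) (iota 0 m) by rewrite -iotaDl.
rewrite big_map.
have -> : \sum_(i <- iota 0 m) G (nth (0,0)%N (cyc_pairs s) (1 + i).-1)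
   = \sum_(p <- cyc_pairs s) G p by rewrite (big_nth (0,0)%N) Hcp /index_iota subn0.
rewrite /G /Fp; case: (in_Co s); last first.
  by rewrite big1 // deriv0 !mulr0 addr0 mulr0.
rewrite (eq_bigr (fun p : nat * nat => 'X^(odd m.+1) * (if odd p.2 then 'X^(drop_oo s - oop p) else 0))); last first.
  by move=> p _; case: (odd p.2); rewrite ?mulr0.
rewrite -mulr_sumr sum_pairs -(count_odd2 Hp) -count_split_oo -drop_ooE.
congr (_ * _); rewrite derivXn.
move: (count _ _) => a.
case: (drop_oo s) => [|K] /=; first by rewrite !mulr0n !mulr0 !addr0 addn0 mulr_natl.
rewrite exprS natrD; ring.
Qed.

Lemma mem_cycles n t : (t \in cycles n) = perm_eq t (iota 1 n) && (head 0%N t == 1%N).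
Proof. by rewrite mem_filter mem_permutations andbC. Qed.

Lemma uniq_cycles n : uniq (cycles n).
Proof. exact: filter_uniq (permutations_uniq _). Qed.

Lemma iotaS_perm m : perm_eq (iota 1 m.+1) (m.+1 :: iota 1 m).
Proof.
have -> : iota 1 m.+1 = iota 1 m ++ [:: m.+1] by have := iotaD 1 m 1; rewrite addn1 add1n.
by rewrite perm_catC.
Qed.

Lemma perm_ins s i n : perm_eq (ins s i n) (n :: s).
Proof.
rewrite /ins -cat1s perm_catCA /= perm_cons cat_take_drop //.
Qed.

Lemma ins_head s i n : (0 < i)%N -> (0 < size s)%N -> head 0%N (ins s i n) = head 0%N s.
Proof. by case: s => [|x s]; case: i. Qed.

Lemma index_ins s i n : n \notin s -> (i <= size s)%N -> index n (ins s i n) = i.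
Proof.
move=> Hn Hi; rewrite /ins index_cat.
have -> : (n \in take i s) = false by apply/negbTE; apply: contra Hn; apply: mem_take.
by rewrite size_takel //= eqxx addn0.
Qed.

Lemma take_ins s i n : (i <= size s)%N -> take i (ins s i n) = take i s.
Proof. by move=> Hi; rewrite /ins take_size_cat // size_takel. Qed.

Lemma drop_ins s i n : (i <= size s)%N -> drop i.+1 (ins s i n) = drop i s.
Proof.
move=> Hi; rewrite /ins -cat_rcons drop_size_cat // size_rcons size_takel //.
Qed.

Lemma cycles_notin m s : s \in cycles m -> m.+1 \notin s.
Proof.
rewrite mem_cycles => /andP [Hp _]; rewrite (perm_mem Hp) mem_iota; lia.
Qed.

Lemma size_cycles m s : s \in cycles m -> size s = m.
Proof. by rewrite mem_cycles => /andP [Hp _]; rewrite (perm_size Hp) size_iota. Qed.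

Lemma head_take_cat (u w : seq nat) j : (0 < j)%N -> (0 < size u)%N ->
  head 0%N (take j u ++ w) = head 0%N u.
Proof. by case: u => [|x u] //; case: j. Qed.

Lemma cycles_ins m : (0 < m)%N ->
  perm_eq (cycles m.+1) [seq ins s i m.+1 | s <- cycles m, i <- iota 1 m].
Proof.
move=> Hm; apply: uniq_perm; first exact: uniq_cycles.
  apply: allpairs_uniq; [exact: uniq_cycles | exact: iota_uniq |].
  move=> [s1 i1] [s2 i2] /allpairsP [[a b] [Ha Hb [-> ->]]] /allpairsP [[c d] [Hc Hd [-> ->]]] /= E.
  move: Ha Hb Hc Hd E => /= Ha Hb Hc Hd E.
  move: Hb Hd; rewrite !mem_iota => Hb Hd.
  have Hb' : (b <= size a)%N by rewrite (size_cycles Ha); lia.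
  have Hd' : (d <= size c)%N by rewrite (size_cycles Hc); lia.
  have Ebd : b = d by rewrite -(index_ins (cycles_notin Ha) Hb') E index_ins // cycles_notin.
  subst d; congr (_, _).
  by rewrite -(cat_take_drop b a) -(take_ins m.+1 Hb') -(drop_ins m.+1 Hb') E take_ins // drop_ins // cat_take_drop.
move=> t; apply/idP/allpairsP.
  rewrite mem_cycles => /andP [Hp Hh].
  have Hn : m.+1 \in t by rewrite (perm_mem Hp) mem_iota; lia.
  set i := index m.+1 t.
  have Hit : (i < size t)%N by rewrite index_mem.
  have Ht : t = take i t ++ m.+1 :: drop i.+1 t.
    by rewrite -{1}(nth_index 0%N Hn) -drop_nth // cat_take_drop.
  have Hsz : size t = m.+1 by rewrite (perm_size Hp) size_iota.
  have Hi0 : (0 < i)%N.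
    rewrite lt0n; apply/negP => /eqP Hi0.
    move: Ht Hh; rewrite Hi0 take0 /= => -> /=; lia.
  exists (take i t ++ drop i.+1 t, i); split => /=.
  - rewrite mem_cycles; apply/andP; split.
      have H1 : perm_eq t (m.+1 :: (take i t ++ drop i.+1 t)).
        by rewrite {1}Ht -cat1s perm_catCA.
      have H2 : perm_eq (m.+1 :: (take i t ++ drop i.+1 t)) (m.+1 :: iota 1 m).
        by rewrite perm_sym in H1; apply: (perm_trans H1); apply: (perm_trans Hp); exact: iotaS_perm.
      by rewrite perm_cons in H2.
    by rewrite head_take_cat // Hsz.
  - rewrite mem_iota; lia.
  - by rewrite /ins take_size_cat ?drop_size_cat ?size_takel // ltnW.
move=> [[s i] /= [Hs Hi ->]].
move: Hi; rewrite mem_iota => Hi.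
move: (Hs); rewrite mem_cycles => /andP [Hp Hh].
have Hsz := size_cycles Hs.
rewrite mem_cycles; apply/andP; split.
  rewrite (perm_trans (perm_ins _ _ _)) // perm_sym (perm_trans (iotaS_perm m)) //.
  by rewrite perm_cons perm_sym.
by rewrite ins_head // ?Hsz; lia.
Qed.

Lemma deriv_sumL (I : Type) (r : seq I) (F : I -> {poly int}) :
  (\sum_(i <- r) F i)^`() = \sum_(i <- r) (F i)^`().
Proof.
elim: r => [|a r IH]; first by rewrite !big_nil deriv0.
by rewrite !big_cons derivD IH.
Qed.

Lemma lhsE m : (0 < m)%N -> lhs_series m = \sum_(s <- cycles m) Fp s.
Proof. by move=> Hm; rewrite /lhs_series Hm big_mkcond. Qed.

Lemma lhs_rec m : (0 < m)%N -> lhs_series m.+1 =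
  'X^(odd m.+1) * ((uphalf m)%:R * lhs_series m + (1 - 'X) * (lhs_series m)^`()).
Proof.
move=> Hm; rewrite !lhsE // (perm_big _ (cycles_ins Hm)) big_allpairs_dep /=.
rewrite (eq_big_seq (fun s => 'X^(odd m.+1) * ((uphalf m)%:R * Fp s + (1 - 'X) * (Fp s)^`()))); last first.
  by move=> s; rewrite mem_cycles => /andP [Hp _]; rewrite sum_ins.
rewrite -mulr_sumr big_split /= -!mulr_sumr deriv_sumL.
by [].
Qed.

Lemma lhs1 : lhs_series 1 = 1.
Proof. by rewrite lhsE // /cycles /= big_cons big_nil /Fp /= expr0 addr0. Qed.

Lemma lhs0 : lhs_series 0 = 0.
Proof. by []. Qed.

Lemma rhs_rec n : (0 < n)%N -> rhs_series n.+1 =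
  'X^(odd n.+1) * ((uphalf n)%:R * rhs_series n + (1 - 'X) * (rhs_series n)^`()).
Proof.
move=> Hn; have [k [Ek|Ek]] := eo_cases n; rewrite Ek in Hn *; clear Ek n.
  case: k Hn => [|K] Hn; first by [].
  by rewrite rhs_odd rhs_even Osum_rec uphalf_double oddS odd_double expr1.
rewrite -doubleS rhs_even rhs_odd Esum_rec.
have -> : odd k.+1.*2 = false by rewrite odd_double.
rewrite expr0 mul1r /=.
by rewrite doubleK.
Qed.

Lemma rhs0 : rhs_series 0 = 0.
Proof. by rewrite /rhs_series !fps_sum1E !big_ord0 addr0. Qed.

Lemma rhs1 : rhs_series 1 = 1.
Proof. by have := rhs_odd 0; rewrite Osum1. Qed.

Theorem theorem1p2 : forall n : nat, lhs_series n = rhs_series n.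
Proof.
elim=> [|n IH]; first by rewrite lhs0 rhs0.
case: n IH => [|n] IH; first by rewrite lhs1 rhs1.
by rewrite lhs_rec // rhs_rec // IH.
Qed.
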